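(* Let $n$ be any positive integer. There exists a 1-layer transformer, with a suitable position embedding, that performs function evaluation for domain $[n]$ in the ''consecutive positions, ordered keys'' presentation. That is, for every function $f:[n]\to[n]$ and every target key $i^*\in[n]$, on the input sequence $0,f(0),1,f(1),\dots,n-1,f(n-1),i^*$ of length $2n+1$ (position $2i$ holds $i$, position $2i+1$ holds $f(i)$, position $2n$ holds $i^*$), it outputs $f(i^* )$. The transformer uses leftmost hard attention, one attention head, embedding dimension $4$, $O(\log n)$ bits of precision, no residual connections, and no MLP layer.
   Context: Notation: $[n]=\{0,1,\dots,n-1\}$. Transformer model (encoder-only, no masking, no layer normalization). A transformer of embedding dimension $d$ consists of three parts. - An input embedding maps an input sequence $x_0,\dots,x_{L-1}$ to vectors $\mathbf{e}(x_i)=\mathbf{w}(x_i)+\mathbf{p}(i)\in\mathbb{R}^d$. Here $\mathbf{w}$ is the token embedding and $\mathbf{p}$ is the position embedding, which may be chosen freely. - A sequence of length-preserving layers follows. - An output map comes last. Given an unembedding matrix $\mathbf{U}\in\mathbb{R}^{n\times d}$, the output is the index $i\in[n]$ maximizing $(\mathbf{U}\mathbf{Y}[L-1])_i$, where $\mathbf{Y}$ is the final layer's output sequence. A single-head attention layer has matrices $\mathbf{W}^Q,\mathbf{W}^K\in\mathbb{R}^{d_{hid}\times d}$ and $\mathbf{W}^V\in\mathbb{R}^{d\times d}$. It computes the scores $s[i,j]=(\mathbf{W}^Q\mathbf{X}[i])\cdot(\mathbf{W}^K\mathbf{X}[j])/\sqrt{d_{hid}}$, and outputs $\mathbf{Y}[i]=\sum_j\alpha[i,j]\mathbf{W}^V\mathbf{X}[j]$.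 - In leftmost hard attention, $\alpha[i,j]=1$ for the smallest $j$ maximizing $s[i,j]$, and $\alpha[i,j]=0$ otherwise. - With residuals the output is $\mathbf{X}[i]+\sum_j\alpha[i,j]\mathbf{W}^V\mathbf{X}[j]$. An MLP layer applies a 2-layer ReLU network position-wise. A $k$-layer transformer has $k$ attention layers and any number of MLP layers. *)

(* Defs.v *)
From HB Require Import structures.
From mathcomp Require Import all_boot all_order all_algebra.
From mathcomp Require Import reals.
Set Implicit Arguments. Unset Strict Implicit. Unset Printing Implicit Defensive.
Import Order.TTheory GRing.Theory Num.Theory.
Local Open Scope ring_scope.

Definition seqlen (n : nat) : nat := (2 * n).+1.

(* A 1-layer transformer: vocabulary and output classes are [n] = 'I_n,
   embedding dimension d, one single-head attention layer with hidden
   dimension dh, NO residual connection and NO MLP layer. *)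
Record tf1 (R : nzRingType) (n d dh : nat) := TF1 {
  tok : 'I_n -> 'cV[R]_d;
  pos : 'I_(seqlen n) -> 'cV[R]_d;
  WQ  : 'M[R]_(dh, d);
  WK  : 'M[R]_(dh, d);
  WV  : 'M[R]_d;
  UU  : 'M[R]_(n, d)
}.

Section Run.
Variables (R : rcfType) (n d dh : nat) (T : tf1 R n d dh).

Definition emb (x : nat -> 'I_n) (p : 'I_(seqlen n)) : 'cV[R]_d :=
  tok T (x (nat_of_ord p)) + pos T p.

Definition qvec x p : 'cV[R]_dh := WQ T *m emb x p.
Definition kvec x p : 'cV[R]_dh := WK T *m emb x p.

Definition rawscore x p q : R := \sum_(k < dh) qvec x p k 0 * kvec x q k 0.

Definition score x p q : R := rawscore x p q / Num.sqrt (dh%:R).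

Definition leftmost_argmax m (s : 'I_m -> R) (j : 'I_m) : Prop :=
  (forall k, s k <= s j) /\ (forall k : 'I_m, (k < j)%N -> s k < s j).

Definition vvec x j : 'cV[R]_d := WV T *m emb x j.
Definition logits x j : 'cV[R]_n := UU T *m vvec x j.

(* Leftmost hard attention at the last position L-1 attends to the leftmost
   maximizer j of s[L-1, .]; Y[L-1] = W^V X[j]; the output is the index
   maximizing (U Y[L-1]).  [outputs x y] says the output is (uniquely) y. *)
Definition outputs (x : nat -> 'I_n) (y : 'I_n) : Prop :=
  forall j, leftmost_argmax (score x ord_max) j ->
    forall k : 'I_n, k != y -> logits x j k 0 < logits x j y 0.

End Run.

(* O(log n)-bit precision: a value is representable with precision parameter C
   if it is a ratio a/b of integers with |a|, |b| <= (n+1)^C  (i.e. it is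
   described by O(C log n) bits). *)
Definition repr_prec (R : numFieldType) (C n : nat) (v : R) : Prop :=
  exists a b : int, b != 0 /\ (`|a| <= (n.+1 ^ C)%:Z)%R /\
    (`|b| <= (n.+1 ^ C)%:Z)%R /\ v = a%:~R / b%:~R.

Definition params_prec (R : rcfType) (C n d dh : nat) (T : tf1 R n d dh) : Prop :=
  (forall a i, repr_prec C n (tok T a i 0)) /\
  (forall p i, repr_prec C n (pos T p i 0)) /\
  (forall i j, repr_prec C n (WQ T i j)) /\
  (forall i j, repr_prec C n (WK T i j)) /\
  (forall i j, repr_prec C n (WV T i j)) /\
  (forall i j, repr_prec C n (UU T i j)).

Definition run_prec (R : rcfType) (C n d dh : nat) (T : tf1 R n d dh)
    (x : nat -> 'I_n) : Prop :=
  (forall p i, repr_prec C n (emb T x p i 0)) /\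
  (forall p k, repr_prec C n (qvec T x p k 0)) /\
  (forall p k, repr_prec C n (kvec T x p k 0)) /\
  (forall p q, repr_prec C n (rawscore T x p q)) /\
  (forall p i, repr_prec C n (vvec T x p i 0)) /\
  (forall p k, repr_prec C n (logits T x p k 0)).

(* Main.v *)
Require Import Defs.
From HB Require Import structures.
From mathcomp Require Import all_boot all_order all_algebra.
From mathcomp Require Import reals.
From mathcomp Require Import zify ring lra.
Import Order.TTheory GRing.Theory Num.Theory.
Local Open Scope ring_scope.

Definition P1 (p : nat) : int := if odd p then (p./2)%:Z else 0.
Definition P2 (p : nat) : int := if odd p then - ((p./2 * p./2)%N%:Z) else -1.
Definition P3 (n p : nat) : int := if odd p || (p == 2 * n)%N then 1 else 0.

Section Constr.
Variables (R : rcfType) (n : nat).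

Definition tokE (a : 'I_n) : 'cV[R]_4 :=
  \col_i (if (i : nat) == 0%N then ((a : nat)%:Z)%:~R else 0).
Definition posE (p : 'I_(seqlen n)) : 'cV[R]_4 :=
  \col_i (if (i : nat) == 1%N then (P1 p)%:~R else if (i : nat) == 2%N then (P2 p)%:~R
          else if (i : nat) == 3%N then (P3 n p)%:~R else 0).
Definition WQm : 'M[R]_(2, 4) := \matrix_(i, j)
  (if (((i : nat) == 0%N) && ((j : nat) == 0%N)) || (((i : nat) == 1%N) && ((j : nat) == 3%N)) then 1 else 0).
Definition WKm : 'M[R]_(2, 4) := \matrix_(i, j)
  (if ((i : nat) == 0%N) && ((j : nat) == 1%N) then 2
   else if ((i : nat) == 1%N) && ((j : nat) == 2%N) then 1 else 0).
Definition WVm : 'M[R]_4 := \matrix_(i, j)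
  (if (((i : nat) == 0%N) && ((j : nat) == 0%N)) || (((i : nat) == 1%N) && ((j : nat) == 3%N)) then 1 else 0).
Definition UUm : 'M[R]_(n, 4) := \matrix_(k, j)
  (if (j : nat) == 0%N then ((2 * k)%N%:Z)%:~R
   else if (j : nat) == 1%N then (- ((k * k)%N%:Z))%:~R else 0).

Definition TT : tf1 R n 4 2 := TF1 tokE posE WQm WKm WVm UUm.

Lemma embE x p (i : 'I_4) : emb TT x p i 0 =
  (if (i : nat) == 0%N then ((x p : nat)%:Z) else if (i : nat) == 1%N then P1 p
   else if (i : nat) == 2%N then P2 p else if (i : nat) == 3%N then P3 n p else 0)%:~R.
Proof.
rewrite /emb !mxE /=.
by case: i => [[|[|[|[|i]]]] Hi] //=; rewrite ?addr0 ?add0r.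
Qed.

Lemma qvecE x p (k : 'I_2) : qvec TT x p k 0 =
  (if (k : nat) == 0%N then ((x p : nat)%:Z) else P3 n p)%:~R.
Proof.
rewrite /qvec mxE !big_ord_recl big_ord0 !embE !mxE /=.
case: k => [[|[|k]] Hk] //=; ring.
Qed.

Lemma kvecE x p (k : 'I_2) : kvec TT x p k 0 =
  (if (k : nat) == 0%N then 2 * P1 p else P2 p)%:~R.
Proof.
rewrite /kvec mxE !big_ord_recl big_ord0 !embE !mxE /=.
case: k => [[|[|k]] Hk] //=; ring.
Qed.

Lemma rawE x p q : rawscore TT x p q =
  ((x p : nat)%:Z * (2 * P1 q) + P3 n p * P2 q)%:~R.
Proof.
rewrite /rawscore !big_ord_recl big_ord0 !qvecE !kvecE /=; ring.
Qed.

Lemma vvecE x p (i : 'I_4) : vvec TT x p i 0 =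
  (if (i : nat) == 0%N then ((x p : nat)%:Z) else if (i : nat) == 1%N then P3 n p else 0)%:~R.
Proof.
rewrite /vvec mxE !big_ord_recl big_ord0 !embE !mxE /=.
by case: i => [[|[|[|[|i]]]] Hi] //=; ring.
Qed.

Lemma logitsE x p (k : 'I_n) : logits TT x p k 0 =
  ((2 * k)%N%:Z * (x p : nat)%:Z - (k * k)%N%:Z * P3 n p)%:~R.
Proof.
rewrite /logits mxE !big_ord_recl big_ord0 !vvecE !mxE /=; ring.
Qed.

End Constr.

Lemma reprZ (n : nat) (R : rcfType) (z : int) :
  `|z| <= (n.+1 ^ 3)%:Z -> repr_prec 3 n (z%:~R : R).
Proof.
move=> Hz; exists z, 1; split => //; split => //; split.
  by rewrite normr1 lez_nat expn_gt0.
by rewrite rmorph1 divr1.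
Qed.

Lemma half_le (n p : nat) : (p < seqlen n)%N -> (p./2 <= n)%N.
Proof.
rewrite /seqlen => Hp.
have E := odd_double_half p. rewrite -muln2 in E.
move: (p./2) (odd p) E Hp => h [] /= E; lia.
Qed.

Lemma repr_c (n : nat) (R : rcfType) (c : nat) : (0 < n)%N -> (c <= 2)%N -> repr_prec 3 n (c%:R : R).
Proof.
move=> Hn Hc; have -> : (c%:R : R) = (c%:Z)%:~R by []. apply: reprZ.
rewrite !expnS expn0; nia.
Qed.

Lemma repr_N (n : nat) (R : rcfType) (v : R) : repr_prec 3 n v -> repr_prec 3 n (- v).
Proof.
case=> a [b [Hb [Ha [Hb' ->]]]]; exists (- a), b; split => //; split.
  by rewrite normrN.
by split => //; rewrite rmorphN mulNr.
Qed.

Ltac bnd := lazymatch goal with H : is_true (0 < _)%N |- _ => have := H end; rewrite !expnS expn0 /P1 /P2 /P3; repeat case: ifP => _; nia.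

Theorem theorem3 :
  exists C : nat, forall (R : realType) (n : nat), (0 < n)%N ->
  exists (dh : nat) (T : tf1 R n 4 dh),
    params_prec C T /\
    forall (f : 'I_n -> 'I_n) (istar : 'I_n) (x : nat -> 'I_n),
      (forall i : 'I_n, x (2 * i)%N = i) ->
      (forall i : 'I_n, x (2 * i).+1 = f i) ->
      x (2 * n)%N = istar ->
      run_prec C T x /\ outputs T x (f istar).
Proof.
exists 3%N => R n n0; exists 2%N, (TT R n); split.
  split; [|split; [|split; [|split; [|split]]]].
  - move=> a i; rewrite /= mxE; case: ifP => _; last exact: (@repr_c n R 0%N n0 isT).
    apply: reprZ; have := ltn_ord a; bnd.
  - move=> p i; rewrite /= mxE.
    repeat case: ifP => _; try exact: (@repr_c n R 0%N n0 isT); apply: reprZ;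
    have := half_le _ _ (ltn_ord p); bnd.
  - move=> i j; rewrite /= mxE.
    by repeat case: ifP => _; [exact: (@repr_c n R 1%N n0 isT)|exact: (@repr_c n R 0%N n0 isT)].
  - move=> i j; rewrite /= mxE.
    by repeat case: ifP => _; [exact: (@repr_c n R 2%N n0 isT)|exact: (@repr_c n R 1%N n0 isT)|exact: (@repr_c n R 0%N n0 isT)].
  - move=> i j; rewrite /= mxE.
    by repeat case: ifP => _; [exact: (@repr_c n R 1%N n0 isT)|exact: (@repr_c n R 0%N n0 isT)].
  - move=> i j; rewrite /= mxE.
    repeat case: ifP => _; try exact: (@repr_c n R 0%N n0 isT); apply: reprZ;
    have := ltn_ord i; bnd.
move=> f istar x Hx0 Hx1 Hxn; split.
  split; [|split; [|split; [|split; [|split]]]].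
  - move=> p i; rewrite embE; apply: reprZ.
    have := half_le _ _ (ltn_ord p); have := ltn_ord (x p); bnd.
  - move=> p i; rewrite qvecE; apply: reprZ.
    have := ltn_ord (x p); bnd.
  - move=> p i; rewrite kvecE; apply: reprZ.
    have := half_le _ _ (ltn_ord p); bnd.
  - move=> p q; rewrite rawE; apply: reprZ.
    have := half_le _ _ (ltn_ord q); have := ltn_ord (x p); bnd.
  - move=> p i; rewrite vvecE; apply: reprZ.
    have := ltn_ord (x p); bnd.
  - move=> p i; rewrite logitsE; apply: reprZ.
    have := ltn_ord (x p); have := ltn_ord i; bnd.
move=> j [Hmax _] k Hk.
have Hq : ((2 * istar).+1 < seqlen n)%N by rewrite /seqlen; have := ltn_ord istar; lia.
have := Hmax (Ordinal Hq).
rewrite /score !rawE /= Hxn.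
have Hs : 0 < (Num.sqrt (2%:R : R))^-1 by rewrite invr_gt0 sqrtr_gt0 ltr0n.
rewrite ler_pM2r // ler_int.
have Hn3 : P3 n (2 * n) = 1 by rewrite /P3 eqxx orbT.
have Ho : odd (2 * istar) = false by rewrite mul2n odd_double.
have Hhf : (uphalf (2 * istar) = istar)%N by rewrite mul2n uphalf_double.
rewrite Hn3 /P1 /P2 /= Ho /= Hhf.
have E := odd_double_half j. rewrite -muln2 in E.
case Hoj: (odd j); last first.
  rewrite Hoj /= in E *; lia.
move=> Hle.
have Hh : (j./2 = istar)%N by rewrite Hoj /= in E; nia.
have Hj : (nat_of_ord j = (2 * istar).+1)%N by rewrite Hoj /= in E; lia.
rewrite !logitsE ltr_int Hj Hx1 /P3 /= Ho /=.
have : (k : nat) != f istar by [].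
move: (k : nat) (f istar : nat) => a b /eqP Hab.
nia.
Qed.
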